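(* Let $X$ be a finite set with $|X|=n>1$ and let $G$ be the undirected graph whose vertices are the weak orders on $X$, with $W,W'$ adjacent iff one covers the other in the poset $(\mathbf{WO},\subseteq)$. Then for all weak orders $W,W'$, the shortest-path distance in $G$ between $W$ and $W'$ equals $|J_W\,\Delta\,J_{W'}|$. Consequently $W\mapsto \chi(J_W)\in\{0,1\}^{\mathbf{WO}(2)}$ is an isometric embedding of $G$ into the hypercube graph of dimension $2^n-2$, i.e. $G$ is a partial cube. Equivalently, the family $\mathcal{J}$ is well graded: for any $A,B\in\mathcal{J}$ there is a sequence $A=A_0,A_1,\ldots,A_k=B$ in $\mathcal{J}$ with $k=|A\Delta B|$ and $|A_i\Delta A_{i+1}|=1$ for all $i$.
   Context: A weak order on $X$ is a transitive, strongly complete binary relation on $X$. $\mathbf{WO}(2)$ is the set of weak orders with exactly two indifference classes ($|\mathbf{WO}(2)|=2^n-2$), $J_W=\{U\in\mathbf{WO}(2): W\subseteq U\}$, $\mathcal{J}=\{J_W\}$, and $\chi(J)$ denotes the characteristic vector of $J\subseteq\mathbf{WO}(2)$. $W'$ covers $W$ means $W\subsetneq W'$ with no weak order strictly between them. *)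

(* Defs.v *)
From mathcomp Require Import all_boot.
Set Implicit Arguments. Unset Strict Implicit. Unset Printing Implicit Defensive.

(* Binary relations on a finite set X are represented as {set X * X}:
   (x, y) \in W means  x W y. *)
Section WeakOrders.
Variable X : finType.
Definition rel_of := {set X * X}.

Definition transitiveR (W : rel_of) : bool :=
  [forall x, forall y, forall z, ((x, y) \in W) && ((y, z) \in W) ==> ((x, z) \in W)].
Definition strongly_complete (W : rel_of) : bool :=
  [forall x, forall y, ((x, y) \in W) || ((y, x) \in W)].
Definition weak_order (W : rel_of) : bool := transitiveR W && strongly_complete W.

Definition indiff_class (W : rel_of) (x : X) : {set X} :=
  [set y | ((x, y) \in W) && ((y, x) \in W)].
Definition indiff_classes (W : rel_of) : {set {set X}} :=
  [set indiff_class W x | x : X].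

Definition WO2 (U : rel_of) : bool := weak_order U && (#|indiff_classes U| == 2).

Definition J (W : rel_of) : {set rel_of} := [set U | WO2 U & W \subset U].

Definition symdiff (T : finType) (A B : {set T}) : {set T} := (A :\: B) :|: (B :\: A).

Definition covers (W W' : rel_of) : bool :=
  (W \proper W') && [forall U, ~~ [&& weak_order U, W \proper U & U \proper W']].

Definition adjWO (W W' : rel_of) : bool :=
  [&& weak_order W, weak_order W' & covers W W' || covers W' W].

(* a walk of length (size p) in the graph G from W to W' *)
Definition walk (W W' : rel_of) (p : seq rel_of) : bool :=
  weak_order W && path adjWO W p && (last W p == W').

Definition graph_dist (W W' : rel_of) (d : nat) : Prop :=
  (exists2 p, walk W W' p & size p = d) /\
  (forall p, walk W W' p -> d <= size p).
End WeakOrders.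

(* Main.v *)
Require Import Defs.
From mathcomp Require Import all_boot.
Set Implicit Arguments. Unset Strict Implicit. Unset Printing Implicit Defensive.

Section Aux.
Variable X : finType.
Implicit Types W U V C M : {set X * X}.

Definition cutrel (A : {set X}) : {set X * X} :=
  [set p | (p.1 \in A) || (p.2 \notin A)].
Definition top U : {set X} := [set x | [forall y, (x, y) \in U]].
Definition bigI (S : {set {set X * X}}) : {set X * X} := \bigcap_(U in S) U.

Lemma wo_trans W x y z : weak_order W -> (x, y) \in W -> (y, z) \in W -> (x, z) \in W.
Proof.
case/andP => /forallP /(_ x) /forallP /(_ y) /forallP /(_ z) /implyP H _ h1 h2.
by apply: H; rewrite h1 h2.
Qed.

Lemma wo_comp W x y : weak_order W -> ((x, y) \in W) || ((y, x) \in W).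
Proof. by case/andP => _ /forallP /(_ x) /forallP /(_ y). Qed.

Lemma wo_refl W x : weak_order W -> (x, x) \in W.
Proof. by move=> H; have := wo_comp x x H; rewrite orbb. Qed.

Lemma woI W : (forall x y z, (x, y) \in W -> (y, z) \in W -> (x, z) \in W) ->
  (forall x y, ((x, y) \in W) || ((y, x) \in W)) -> weak_order W.
Proof.
move=> Ht Hc; apply/andP; split.
  apply/forallP => x; apply/forallP => y; apply/forallP => z; apply/implyP.
  by case/andP; apply: Ht.
by apply/forallP => x; apply/forallP => y; apply: Hc.
Qed.

Lemma indiff_cut (A : {set X}) x :
  indiff_class (cutrel A) x = if x \in A then A else ~: A.
Proof.
apply/setP => y; case Hx: (x \in A); rewrite !inE /= Hx /=;
by case: (y \in A).
Qed.

Lemma cutrel_WO2 (A : {set X}) a b : a \in A -> b \notin A -> WO2 (cutrel A).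
Proof.
move=> Ha Hb; apply/andP; split.
  apply: woI.
    move=> x y z; rewrite !inE /=.
    by case: (x \in A); case: (y \in A); case: (z \in A).
  by move=> x y; rewrite !inE /=; case: (x \in A); case: (y \in A).
have -> : indiff_classes (cutrel A) = [set A; ~: A].
  apply/setP => B; rewrite !inE; apply/imsetP/orP.
    by case=> x _ ->; rewrite indiff_cut; case: (x \in A); [left|right].
  case=> /eqP ->.
    by exists a => //; rewrite indiff_cut Ha.
  by exists b => //; rewrite indiff_cut (negbTE Hb).
rewrite cards2; have -> : (A != ~: A) => //.
by apply/eqP => HA; have := Ha; rewrite {1}HA inE Ha.
Qed.

Lemma three_classes U a b c : weak_order U -> (a, b) \notin U -> (b, c) \notin U ->
  2 < #|indiff_classes U|.
Proof.
move=> HU Hab Hbc.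
have Hba : (b, a) \in U by have := wo_comp a b HU; rewrite (negbTE Hab).
have Hcb : (c, b) \in U by have := wo_comp b c HU; rewrite (negbTE Hbc).
have Hac : (a, c) \notin U.
  by apply/negP => Hac; move/negP: Hab; apply; apply: wo_trans Hac Hcb.
set ca := indiff_class U a; set cb := indiff_class U b; set cc := indiff_class U c.
have sub : ca |: [set cb; cc] \subset indiff_classes U.
  apply/subsetP => B; rewrite !inE => /or3P [] /eqP ->; apply/imsetP; by eexists.
apply: leq_trans (subset_leq_card sub).
rewrite cardsU1 cards2 !inE.
have nbc : cb != cc.
  apply/eqP => E; have : c \in cc by rewrite inE !wo_refl.
  by rewrite -E inE (negbTE Hbc).
have nab : ca != cb.
  apply/eqP => E; have : b \in cb by rewrite inE !wo_refl.
  by rewrite -E inE (negbTE Hab).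
have nac : ca != cc.
  apply/eqP => E; have : c \in cc by rewrite inE !wo_refl.
  by rewrite -E inE (negbTE Hac).
by rewrite negb_or nbc nab nac.
Qed.

Lemma top_cut U : WO2 U -> U = cutrel (top U).
Proof.
case/andP => HU /eqP H2.
apply/setP => -[a b]; rewrite inE /=; apply/idP/idP.
  move=> Hab; case Hb: (b \in top U); last by rewrite orbT.
  rewrite /= orbF inE; apply/forallP => y.
  by apply: wo_trans Hab _; move: Hb; rewrite inE => /forallP.
case/orP; first by rewrite inE => /forallP /(_ b).
rewrite inE => /forallPn [c Hc]; apply/idPn => Hab.
by have := three_classes HU Hab Hc; rewrite H2.
Qed.

Lemma WO2_not_full U : WO2 U -> U != setT.
Proof.
case/andP => _ /eqP H2; apply/eqP => E; move: H2.
have: indiff_classes U \subset [set setT].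
  apply/subsetP => B /imsetP [x _ ->]; rewrite inE; apply/eqP/setP => y.
  by rewrite !inE E !inE.
by move/subset_leq_card; rewrite cards1 => H E2; move: H; rewrite E2.
Qed.

Lemma top_np U : WO2 U -> exists2 a, a \in top U & exists2 b, b \in X & b \notin top U.
Proof.
move=> HU; have E := top_cut HU; have NF := WO2_not_full HU.
case: (set_0Vmem (top U)) => [H0|[a Ha]].
  move: NF; rewrite E H0; case/negP; apply/eqP/setP => p; rewrite !inE.
  by rewrite orbT.
exists a => //.
case: (set_0Vmem (~: top U)) => [H1|[b Hb]]; last by exists b; rewrite // -in_setC.
move: NF; rewrite E; case/negP; apply/eqP/setP => p; rewrite in_setT inE /=.
have : p.1 \notin ~: top U by rewrite H1 inE.
by rewrite inE negbK => ->.
Qed.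


Lemma J_WO2 W U : U \in J W -> WO2 U.
Proof. by rewrite inE => /andP []. Qed.
Lemma J_sub W U : U \in J W -> W \subset U.
Proof. by rewrite inE => /andP []. Qed.

Lemma bigI_wo W (S : {set {set X * X}}) : weak_order W -> S \subset J W -> weak_order (bigI S).
Proof.
move=> HW /subsetP HS; apply: woI.
  move=> x y z /bigcapP H1 /bigcapP H2; apply/bigcapP => A HA.
  have /andP [HA' _] := J_WO2 (HS _ HA).
  exact: wo_trans HA' (H1 _ HA) (H2 _ HA).
move=> x y; case Hxy: ((x, y) \in W).
  by apply/orP; left; apply/bigcapP => A HA; apply: (subsetP (J_sub (HS _ HA))).
have Hyx : (y, x) \in W by have := wo_comp x y HW; rewrite Hxy.
by apply/orP; right; apply/bigcapP => A HA; apply: (subsetP (J_sub (HS _ HA))).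
Qed.

Lemma bigI_anti (S T : {set {set X * X}}) : S \subset T -> bigI T \subset bigI S.
Proof.
move/subsetP => H; apply/subsetP => p /bigcapP Hp; apply/bigcapP => A HA.
exact: Hp (H _ HA).
Qed.

Lemma bigI_J W : weak_order W -> bigI (J W) = W.
Proof.
move=> HW; apply/eqP; rewrite eqEsubset; apply/andP; split; last first.
  by apply/subsetP => p Hp; apply/bigcapP => U /J_sub /subsetP; apply.
apply/subsetP => -[x y] H; apply/idPn => Hxy.
pose A := [set z | ((z, x) \in W) && ((x, z) \notin W)].
have Hyx : (y, x) \in W by have := wo_comp x y HW; rewrite (negbTE Hxy).
have yA : y \in A by rewrite inE Hyx Hxy.
have xA : x \notin A by rewrite inE wo_refl.
have UJ : cutrel A \in J W.
  rewrite inE (cutrel_WO2 yA xA) /=; apply/subsetP => -[a b] Hab; rewrite inE /=.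
  case Hb: (b \in A); last by rewrite orbT.
  move: Hb; rewrite !inE => /andP [Hbx Hxb].
  rewrite orbF; apply/andP; split; first exact: wo_trans HW Hab Hbx.
  apply/negP => Hxa.
  by move/negP: Hxb; apply; apply: wo_trans Hxa Hab.
move/bigcapP: H => /(_ _ UJ); rewrite inE /=.
by rewrite (negbTE xA) yA.
Qed.

Lemma J_inj U V : weak_order U -> weak_order V -> J U = J V -> U = V.
Proof. by move=> HU HV E; rewrite -(bigI_J HU) -(bigI_J HV) E. Qed.

Lemma J_anti U V : U \subset V -> J V \subset J U.
Proof.
move=> H; apply/subsetP => C; rewrite !inE => /andP [-> HC] /=.
exact: subset_trans H HC.
Qed.

Lemma top_upset W C : C \in J W -> forall a b, (a, b) \in W -> b \in top C -> a \in top C.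
Proof.
move=> HC a b Hab; rewrite !inE => /forallP Hb; apply/forallP => y.
have /andP [HCw _] := J_WO2 HC.
exact: wo_trans HCw (subsetP (J_sub HC) _ Hab) (Hb y).
Qed.

Lemma J_chain W A B : weak_order W -> A \in J W -> B \in J W ->
  (top A \subset top B) || (top B \subset top A).
Proof.
move=> HW HA HB; apply/idPn; rewrite negb_or => /andP [/subsetPn [a Ha Hna] /subsetPn [b Hb Hnb]].
case/orP: (wo_comp a b HW) => H.
  by move/negP: Hna; apply; apply: top_upset HB _ _ H Hb.
by move/negP: Hnb; apply; apply: top_upset HA _ _ H Ha.
Qed.

Definition is_chain (G : {set {set X}}) :=
  forall A B, A \in G -> B \in G -> (A \subset B) || (B \subset A).

Lemma chain_card (G : {set {set X}}) A B : is_chain G -> A \in G -> B \in G ->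
  #|A| <= #|B| -> A \subset B.
Proof.
move=> HG HA HB Hc; apply/idPn => nAB.
have : B \proper A.
  rewrite properE nAB andbT; by case/orP: (HG _ _ HA HB) => // H; rewrite H in nAB.
by move/proper_card; rewrite ltnNge Hc.
Qed.

Lemma chain_max (G : {set {set X}}) B0 : is_chain G -> B0 \in G ->
  exists2 B, B \in G & forall A, A \in G -> A \subset B.
Proof.
move=> HG HB0; case: (arg_maxnP (fun B : {set X} => #|B|) HB0) => B HB Hmax.
by exists B => // A HA; apply: chain_card HG HA HB (Hmax _ HA).
Qed.

Lemma chain_min (G : {set {set X}}) B0 : is_chain G -> B0 \in G ->
  exists2 B, B \in G & forall A, A \in G -> B \subset A.
Proof.
move=> HG HB0; case: (arg_minnP (fun B : {set X} => #|B|) HB0) => B HB Hmin.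
by exists B => // A HA; apply: chain_card HG HB HA (Hmin _ HA).
Qed.

Lemma chain_sub (G H : {set {set X}}) : is_chain G -> H \subset G -> is_chain H.
Proof. by move=> HG /subsetP HH A B HA HB; apply: HG; apply: HH. Qed.

Lemma J_bigI W (S : {set {set X * X}}) : weak_order W -> S \subset J W -> J (bigI S) = S.
Proof.
move=> HW HS; apply/setP => C; apply/idP/idP; last first.
  move=> HC; rewrite inE (J_WO2 (subsetP HS _ HC)) /=.
  exact: bigcap_inf.
rewrite inE => /andP [HC HsubC].
set D := top C.
have HCD := top_cut HC.
have [x0 Hx0 [z0 _ Hz0]] := top_np HC.
have key : forall x z, x \in D -> z \notin D ->
    exists2 A, A \in S & (x \in top A) && (z \notin top A).
  move=> x z Hx Hz.
  have Hzx : (z, x) \notin C by rewrite HCD inE /= -/D (negbTE Hz) Hx.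
  case: (boolP [exists A in S, (z, x) \notin A]).
    case/existsP => A /andP [HA HzxA]; exists A => //.
    have EA := top_cut (J_WO2 (subsetP HS _ HA)).
    move: HzxA; rewrite {1}EA inE /= negb_or negbK.
    by rewrite andbC.
  rewrite negb_exists => /forallP Hall.
  case/negP: Hzx; apply: (subsetP HsubC); apply/bigcapP => A HA.
  by have := Hall A; rewrite HA /= negbK.
pose F := [set top A | A in S].
have HF : is_chain F.
  move=> A B /imsetP [A' HA' ->] /imsetP [B' HB' ->].
  exact: J_chain HW (subsetP HS _ HA') (subsetP HS _ HB').
pose H := [set B in F | D \subset B].
have Bz : forall z, z \notin D -> exists2 B, B \in H & z \notin B.
  move=> z Hz.
  have [A0 HA0 /andP [_ HzA0]] := key x0 z Hx0 Hz.
  have HG : is_chain [set B in F | z \notin B].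
    by apply: chain_sub HF _; apply/subsetP => B; rewrite inE => /andP [].
  have mem0 : top A0 \in [set B in F | z \notin B].
    by rewrite inE HzA0 andbT; apply/imsetP; exists A0.
  have [B HB Hmax] := chain_max HG mem0.
  move: HB; rewrite inE => /andP [HBF HzB].
  exists B => //; rewrite inE HBF /=.
  apply/subsetP => x Hx.
  have [A HA /andP [HxA HzA]] := key x z Hx Hz.
  have : top A \in [set B in F | z \notin B].
    by rewrite inE HzA andbT; apply/imsetP; exists A.
  by move/Hmax/subsetP; apply.
have [B0 HB0 _] := Bz z0 Hz0.
have HHc : is_chain H by apply: chain_sub HF _; apply/subsetP => B; rewrite inE => /andP [].
have [Bm HBm Hmin] := chain_min HHc HB0.
have EBm : Bm = D.
  apply/eqP; rewrite eqEsubset; move: (HBm); rewrite inE => /andP [_ ->]; rewrite andbT.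
  apply/subsetP => y Hy; apply/idPn => Hny.
  have [By HBy Hny'] := Bz y Hny.
  by move/negP: Hny'; apply; apply: (subsetP (Hmin _ HBy)).
move: HBm; rewrite inE EBm => /andP [/imsetP [A HA EA] _].
suff -> : C = A by [].
by rewrite HCD -/D EA -(top_cut (J_WO2 (subsetP HS _ HA))).
Qed.


Lemma in_setseq (T : finType) (s : seq T) x : (x \in [set y in s]) = (x \in s).
Proof. by rewrite inE. Qed.
Definition inE' := (in_setU, in_setD, in_setI, in_setU1, in_set1, in_cons, in_nil, in_setseq, in_set0, mem_enum).

Lemma covers_J U V C : weak_order U -> weak_order V -> J V \subset J U ->
  C \notin J V -> J U = C |: J V -> covers U V.
Proof.
move=> HU HV HVU HC EU.
have UV : U \subset V.
  by rewrite -(bigI_J HU) -(bigI_J HV); apply: bigI_anti.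
have nVU : ~~ (V \subset U).
  apply/negP => VU; have E : U = V by apply/eqP; rewrite eqEsubset UV VU.
  by move/negP: HC; apply; rewrite -E EU setU11.
apply/andP; split; first by rewrite properE UV nVU.
apply/forallP => M; apply/negP => /and3P [HM /andP [UM nMU] /andP [MV nVM]].
have JVM := J_anti MV; have JMU := J_anti UM.
case HCM: (C \in J M).
  have : J U \subset J M by rewrite EU; apply/subsetP => D; rewrite in_setU1 => /orP [/eqP ->|/(subsetP JVM)] //; rewrite HCM.
  move=> H; have E : M = U by apply: J_inj => //; apply/eqP; rewrite eqEsubset H JMU.
  by rewrite E subxx in nMU.
have : J M \subset J V.
  apply/subsetP => D HD; move: (subsetP JMU _ HD); rewrite EU in_setU1 => /orP [/eqP E|//].
  by rewrite E HCM in HD.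
move=> H; have E : M = V by apply: J_inj => //; apply/eqP; rewrite eqEsubset H JVM.
by rewrite E subxx in nVM.
Qed.

Lemma symdiffC (T : finType) (A B : {set T}) : symdiff A B = symdiff B A.
Proof. by rewrite /symdiff setUC. Qed.

Lemma adj_card U V : weak_order U -> weak_order V -> covers U V ->
  #|symdiff (J U) (J V)| = 1.
Proof.
move=> HU HV /andP [/andP [UV nVU] Hcov].
have JVU := J_anti UV.
have E : symdiff (J U) (J V) = J U :\: J V.
  rewrite /symdiff; apply/setP => D; rewrite !inE'.
  case HD: (D \in J V); rewrite ?andbF ?orbF //=.
  by rewrite (subsetP JVU _ HD).
rewrite E.
have uniqD : forall C1 C2, C1 \in J U :\: J V -> C2 \in J U :\: J V -> C1 = C2.
  move=> C1 C2; rewrite !inE' => /andP [nC1 C1U] /andP [nC2 C2U].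
  apply/eqP/idPn => n12.
  pose T := C1 |: J V.
  have TU : T \subset J U by apply/subsetP => D; rewrite in_setU1 => /orP [/eqP ->|/(subsetP JVU)].
  have TW : T \subset J U := TU.
  have HM := bigI_wo HU TW.
  have JM := J_bigI HU TW.
  move/forallP: Hcov => /(_ (bigI T)) /negP; apply.
  rewrite HM /= !properE.
  have UM : U \subset bigI T by rewrite -{1}(bigI_J HU); apply: bigI_anti.
  have MV : bigI T \subset V by have := @bigI_anti (J V) T; rewrite bigI_J //; apply; apply/subsetP => D Hd; rewrite inE' Hd orbT.
  rewrite UM MV /=; apply/andP; split.
    apply/negP => MU; have E2 : bigI T = U by apply/eqP; rewrite eqEsubset MU UM.
    by move: C2U; rewrite -E2 JM !inE' (negbTE nC2) orbF eq_sym (negbTE n12).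
  apply/negP => VM; have E2 : bigI T = V by apply/eqP; rewrite eqEsubset MV VM.
  by move: nC1; rewrite -E2 JM !inE' eqxx.
have [C1 HC1] : exists C1, C1 \in J U :\: J V.
  apply/set0Pn/eqP => E0.
  have : J U = J V.
    apply/eqP; rewrite eqEsubset JVU andbT; apply/subsetP => D HD.
    apply/idPn => nD; have : D \in J U :\: J V by rewrite inE' nD HD.
    by rewrite E0 inE.
  move/(J_inj HU HV) => EUV; by rewrite EUV subxx in nVU.
apply/eqP/cards1P; exists C1; apply/setP => D; rewrite in_set1.
apply/idP/idP => [HD|/eqP ->//]; apply/eqP; exact: uniqD HD HC1.
Qed.

Lemma adj_card' U V : adjWO U V -> #|symdiff (J U) (J V)| = 1.
Proof.
case/and3P => HU HV /orP [] H; first exact: adj_card.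
by rewrite symdiffC; apply: adj_card.
Qed.

Lemma symdiff_tri (T : finType) (A B C : {set T}) :
  #|symdiff A C| <= #|symdiff A B| + #|symdiff B C|.
Proof.
apply: leq_trans (leq_card_setU _ _).
apply: subset_leq_card; apply/subsetP => x; rewrite !inE'.
by case: (x \in A); case: (x \in B); case: (x \in C).
Qed.

Lemma walk_lb W p : path (@adjWO X) W p ->
  #|symdiff (J W) (J (last W p))| <= size p.
Proof.
elim: p W => [|V p IH] W /=.
  move=> _; rewrite leqn0 cards_eq0; apply/eqP/setP => x; rewrite !inE'.
  by case: (x \in J W).
case/andP => HWV Hp.
apply: leq_trans (symdiff_tri _ (J V) _) _.
by rewrite (adj_card' HWV) add1n ltnS IH.
Qed.

Lemma path_wo W p : path (@adjWO X) W p -> all (@weak_order X) p.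
Proof.
elim: p W => [|V p IH] W //= /andP [/and3P [_ HV _] Hp].
by rewrite HV (IH V Hp).
Qed.

Lemma last_wo W p : weak_order W -> all (@weak_order X) p -> weak_order (last W p).
Proof. by elim: p W => [|V p IH] W //= HW /andP [HV Hp]; apply: IH. Qed.

Lemma down W (s : seq {set X * X}) : weak_order W -> uniq s -> {subset s <= J W} ->
  exists p, [/\ path (@adjWO X) W p, size p = size s & J (last W p) = J W :\: [set x in s]].
Proof.
elim: s W => [|C s IH] W HW.
  move=> _ _; exists [::]; split => //=; apply/setP => x; rewrite !inE'.
  by rewrite ?andbT.
case/andP => nCs Hu Hsub.
have CW : C \in J W by apply: Hsub; rewrite inE' eqxx.
have S1 : J W :\: [set C] \subset J W by apply: subsetDl.
have HW1 := bigI_wo HW S1.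
have JW1 := J_bigI HW S1.
have cov : covers W (bigI (J W :\: [set C])).
  apply: (covers_J (C := C)) => //.
  - by rewrite JW1.
  - by rewrite JW1 !inE' eqxx.
  - rewrite JW1; apply/setP => D; rewrite !inE'.
    by case: eqP => // ->; rewrite CW.
have [|p [Hp Hs HJ]] := IH _ HW1 Hu.
  move=> x Hx; rewrite JW1 !inE' (Hsub x) ?andbT; last by rewrite inE' Hx orbT.
  by apply/eqP => E; rewrite -E Hx in nCs.
exists (bigI (J W :\: [set C]) :: p); split => /=.
- by rewrite Hp andbT /adjWO HW HW1 cov.
- by rewrite Hs.
- rewrite HJ JW1; apply/setP => D; rewrite !inE'.
  by case: (D \in s); case: (D == C); case: (D \in J W).
Qed.

Lemma up W W' (s : seq {set X * X}) : weak_order W -> weak_order W' -> J W \subset J W' ->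
  uniq s -> {subset s <= J W'} -> (forall x, x \in s -> x \notin J W) ->
  exists p, [/\ path (@adjWO X) W p, size p = size s & J (last W p) = J W :|: [set x in s]].
Proof.
move=> HW HW'; elim: s W HW => [|C s IH] W HW HWW'.
  move=> _ _ _; exists [::]; split => //=; apply/setP => x; rewrite !inE'.
  by rewrite orbF.
case/andP => nCs Hu Hsub Hdis.
have CW' : C \in J W' by apply: Hsub; rewrite inE' eqxx.
have nCW : C \notin J W by apply: Hdis; rewrite inE' eqxx.
have S1 : C |: J W \subset J W'.
  by apply/subsetP => D; rewrite in_setU1 => /orP [/eqP ->|/(subsetP HWW')].
have HW1 := bigI_wo HW' S1.
have JW1 := J_bigI HW' S1.
have cov : covers (bigI (C |: J W)) W.
  apply: (covers_J (C := C)) => //; rewrite JW1 //.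
  by apply/subsetP => D HD; rewrite inE' HD orbT.
have G1 : J (bigI (C |: J W)) \subset J W' by rewrite JW1.
have G2 : {subset s <= J W'} by move=> x Hx; apply: Hsub; rewrite inE' Hx orbT.
have G3 : forall x, x \in s -> x \notin J (bigI (C |: J W)).
  move=> x Hx; rewrite JW1 in_setU1 negb_or Hdis ?andbT; last by rewrite inE' Hx orbT.
  by apply/eqP => E; rewrite -E Hx in nCs.
have [p [Hp Hs HJ]] := IH _ HW1 G1 Hu G2 G3.
exists (bigI (C |: J W) :: p); split => /=.
- by rewrite Hp andbT /adjWO HW HW1 cov orbT.
- by rewrite Hs.
- rewrite HJ JW1; apply/setP => D; rewrite !inE'.
  by case: (D == C); case: (D \in J W); case: (D \in s).
Qed.

End Aux.

Unset Implicit Arguments.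
Set Strict Implicit.

Theorem mainTheorem7 (X : finType) (n : nat) :
  #|X| = n -> 1 < n ->
  (forall W W' : {set X * X}, weak_order W -> weak_order W' ->
     graph_dist W W' #|symdiff (J W) (J W')|)
  /\
  (forall W W' : {set X * X}, weak_order W -> weak_order W' ->
     exists s : seq {set X * X},
       [/\ all (@weak_order X) s,
           size s = #|symdiff (J W) (J W')|,
           J (last W s) = J W' &
           path (fun U V => #|symdiff (J U) (J V)| == 1) W s]).
Proof.
move=> _ _.
have walkex : forall W W' : {set X * X}, weak_order W -> weak_order W' ->
    exists p, [/\ path (@adjWO X) W p, last W p = W' & size p = #|symdiff (J W) (J W')|].
  move=> W W' HW HW'.
  have Hsub1 : {subset enum (J W :\: J W') <= J W}.
    by move=> x; rewrite mem_enum in_setD => /andP [].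
  have [p1 [Hp1 Hs1 HJ1]] := down HW (enum_uniq (mem (J W :\: J W'))) Hsub1.
  set Wm := last W p1.
  have HWm : weak_order Wm by apply: last_wo HW (path_wo Hp1).
  have JWm : J Wm = J W :&: J W'.
    rewrite HJ1 set_enum; apply/setP => D; rewrite !inE'.
    by case: (D \in J W); case: (D \in J W').
  have G1 : J Wm \subset J W' by rewrite JWm subsetIr.
  have G2 : {subset enum (J W' :\: J W) <= J W'}.
    by move=> x; rewrite mem_enum in_setD => /andP [].
  have G3 : forall x, x \in enum (J W' :\: J W) -> x \notin J Wm.
    by move=> x; rewrite mem_enum JWm !inE' => /andP [/negbTE -> _].
  have [p2 [Hp2 Hs2 HJ2]] := up HWm HW' G1 (enum_uniq (mem (J W' :\: J W))) G2 G3.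
  have JE : J (last Wm p2) = J W'.
    rewrite HJ2 JWm set_enum; apply/setP => D; rewrite !inE'.
    by case: (D \in J W); case: (D \in J W').
  have HWe : weak_order (last Wm p2) by apply: last_wo HWm (path_wo Hp2).
  exists (p1 ++ p2); split.
  - by rewrite cat_path Hp1 Hp2.
  - by rewrite last_cat; apply: J_inj.
  - rewrite size_cat Hs1 Hs2 -!cardE /symdiff cardsU.
    suff -> : (J W :\: J W') :&: (J W' :\: J W) = set0 by rewrite cards0 subn0.
    apply/setP => D; rewrite !inE'.
    by case: (D \in J W); case: (D \in J W').
split.
  move=> W W' HW HW'; have [p [Hp Hl Hs]] := walkex W W' HW HW'; split.
    by exists p => //; rewrite /walk HW Hp Hl eqxx.
  move=> q /andP [/andP [_ Hq] /eqP Hl'].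
  by have := walk_lb Hq; rewrite Hl'.
move=> W W' HW HW'; have [p [Hp Hl Hs]] := walkex W W' HW HW'.
exists p; split => //.
- exact: path_wo Hp.
- by rewrite Hl.
- by apply: sub_path Hp => U V /adj_card' ->.
Qed.
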